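(* Let Algorithm DEW be run with learning rate $\eta>0$ and delay bound $d_{\max}\ge\max_t d_t$, with $\eta'=\min\{\eta,(4e\,d_{\max})^{-1}\}$, and suppose $N=\max_{t\in[T]}N_t\ge1$. Then for every $i\in\{1,\dots,T\}$ and every $a\in[K]$, for every realization, $$q^a(\Psi_i)\le\left(1+\frac{1}{2N-1}\right)q^a(\Psi_{i-1}).$$
   Context: Setting: fix integers $K\ge 2$, $T\ge 1$, $[K]=\{1,\dots,K\}$. An oblivious adversary fixes in advance losses $\ell_t^a\in[0,1]$ and nonnegative integer delays $d_t$. In each round $t$ the learner picks $A_t\in[K]$ and at the end of round $t$ observes the pairs $(s,\ell_s^{A_s})$ for all $s\le t$ with $s+d_s=t$. Algorithm DEW with inputs $\eta>0$ and $d_{\max}$: set $\eta'=\min\{\eta,(4e\,d_{\max})^{-1}\}$, $w_0^a=1$. For $t=1,2,\dots$: $p_t^a=w_{t-1}^a/\sum_b w_{t-1}^b$; draw $A_t\sim p_t$; at the end of round $t$, for every $s$ with $s+d_s=t$ form $\hat\ell_s^a=\ell_s^a\mathbb 1(a=A_s)/p_s^a$; update $w_t^a=w_{t-1}^a\exp(-\eta'\sum_{s:\,s+d_s=t}\hat\ell_s^a)$. Notation: for a set $C$ of time indices, $q^a(C)=\dfrac{\exp(-\eta'\sum_{s\in C}\hat\ell_s^a)}{\sum_b\exp(-\eta'\sum_{s\in C}\hat\ell_s^b)}$. $N_t=|\{s\in[T]: s+d_s\in[t,t+d_t)\}|$ and $N=\max_tN_t$ (note $N\le 2d_{\max}$).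 $\mathcal Z=(z_1,\dots,z_T)$ is the permutation of $[T]$ sorted in ascending order of $z+d_z$, ties broken randomly, and $\Psi_i=\{z_1,\dots,z_i\}$ (so $\Psi_0=\emptyset$). *)

(* Defs.v *)
From Stdlib Require Import Reals Lra Lia Arith List Bool.
Import ListNotations.
Open Scope R_scope.

(* Conventions: rounds are 1..T; arms [K] are encoded as 0..K-1.
   ell t a : loss of arm a at round t; d t : delay of round t;
   A t : arm played at round t (a realization). *)

Definition rsum (l : list nat) (f : nat -> R) : R :=
  fold_right (fun x acc => f x + acc) 0 l.

Definition eta_eff (eta : R) (dmax : nat) : R :=
  if Nat.eqb dmax 0 then eta else Rmin eta (/ (4 * exp 1 * INR dmax)).

Definition lhat (ell : nat -> nat -> R) (A : nat -> nat) (p : nat -> nat -> R)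
  (s a : nat) : R :=
  if Nat.eqb a (A s) then ell s a / p s a else 0.

Definition observed (d : nat -> nat) (t : nat) : list nat :=
  filter (fun s => Nat.leb (s + d s) t) (seq 1 t).

Definition qdist (K : nat) (eta' : R) (ell : nat -> nat -> R) (A : nat -> nat)
  (p : nat -> nat -> R) (C : list nat) (a : nat) : R :=
  exp (- eta' * rsum C (fun s => lhat ell A p s a)) /
  rsum (seq 0 K) (fun b => exp (- eta' * rsum C (fun s => lhat ell A p s b))).

(* p is the DEW sampling distribution: p_t^a = w_{t-1}^a / sum_b w_{t-1}^b,
   where w_{t-1}^a = exp(-eta' * sum of lhat over rounds observed by end of t-1).
   This recursion determines p_t (t in [1,T]) uniquely, since it only uses p_s, s < t. *)
Definition is_DEW_prob (K T : nat) (eta' : R) (ell : nat -> nat -> R)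
  (d A : nat -> nat) (p : nat -> nat -> R) : Prop :=
  forall t a, (1 <= t <= T)%nat -> (a < K)%nat ->
    p t a = qdist K eta' ell A p (observed d (t - 1)) a.

Definition Nt (T : nat) (d : nat -> nat) (t : nat) : nat :=
  length (filter (fun s => andb (Nat.leb t (s + d s)) (Nat.ltb (s + d s) (t + d t)))
                 (seq 1 T)).

Definition Nmax (T : nat) (d : nat -> nat) : nat :=
  fold_right Nat.max 0%nat (map (Nt T d) (seq 1 T)).

Definition is_arrival_order (T : nat) (d z : nat -> nat) : Prop :=
  (forall i, (1 <= i <= T)%nat -> (1 <= z i <= T)%nat) /\
  (forall i j, (1 <= i <= T)%nat -> (1 <= j <= T)%nat -> z i = z j -> i = j) /\
  (forall i j, (1 <= i <= T)%nat -> (1 <= j <= T)%nat -> (i <= j)%nat ->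
     (z i + d (z i) <= z j + d (z j))%nat).

Definition Psi (z : nat -> nat) (i : nat) : list nat := map z (seq 1 i).

(* Main.v *)
Require Import Defs.
From Stdlib Require Import Reals List Lra Lia Permutation.
Import ListNotations.
Open Scope R_scope.

Lemma exp_ge1 x : 1 + x <= exp x.
Proof. destruct (Req_dec x 0) as [->|H]. rewrite exp_0; lra. left; now apply exp_ineq1. Qed.

Lemma rsum_app1 l x f : rsum (l ++ [x]) f = rsum l f + f x.
Proof. induction l; simpl; [lra| rewrite IHl; lra]. Qed.

Lemma rsum_ext l f g : (forall x, f x = g x) -> rsum l f = rsum l g.
Proof. intro H; induction l; simpl; [lra| rewrite IHl, H; lra]. Qed.

Lemma rsum_le l f g : (forall x, f x <= g x) -> rsum l f <= rsum l g.
Proof. intro H; induction l; simpl; [lra| specialize (H a); lra]. Qed.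

Lemma rsum_lin l f g c : rsum l (fun x => f x - c * g x) = rsum l f - c * rsum l g.
Proof. induction l; simpl; [lra| rewrite IHl; lra]. Qed.

Lemma rsum_pos K f : (1 <= K)%nat -> (forall x, 0 < f x) -> 0 < rsum (seq 0 K) f.
Proof.
  intros HK H. destruct K as [|K]; [lia|]. simpl.
  assert (forall l, 0 <= rsum l f). { induction l; simpl; [lra| specialize (H a); lra]. }
  specialize (H 0%nat); specialize (H0 (seq 1 K)); lra.
Qed.

Lemma rsum_single l f b : NoDup l -> In b l -> (forall c, c <> b -> f c = 0) -> rsum l f = f b.
Proof.
  intros ND. induction ND as [|x l Hx ND IH]; simpl; [tauto|].
  intros [->|Hin] Hf.
  - assert (rsum l f = 0). { clear IH. induction l; simpl; [lra|].
      rewrite Hf. 2:{ intros ->; apply Hx; now left. }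
      rewrite IHl; [lra| |]. intro; apply Hx; now right. now inversion ND. }
    lra.
  - rewrite IH by auto. rewrite Hf; [lra|]. intros ->; contradiction.
Qed.

Lemma rsum_perm l1 l2 f : Permutation l1 l2 -> rsum l1 f = rsum l2 f.
Proof. induction 1; simpl; lra. Qed.

Lemma qdist_perm K e ell A p C1 C2 a : Permutation C1 C2 ->
  qdist K e ell A p C1 a = qdist K e ell A p C2 a.
Proof.
  intro H. unfold qdist. rewrite (rsum_perm _ _ _ H).
  rewrite (rsum_ext (seq 0 K) _ (fun b => exp (- e * rsum C2 (fun s => lhat ell A p s b)))); [reflexivity|].
  intro b. now rewrite (rsum_perm _ _ _ H).
Qed.

Lemma qdist_pos K e ell A p C a : (1 <= K)%nat -> 0 < qdist K e ell A p C a.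
Proof.
  intros HK. unfold qdist. apply Rdiv_lt_0_compat. apply exp_pos.
  apply rsum_pos; auto. intros; apply exp_pos.
Qed.

Lemma step K e ell A p C s b dl :
  (1 <= K)%nat -> 0 < e -> (b < K)%nat ->
  (forall c, c <> b -> lhat ell A p s c = 0) -> 0 <= lhat ell A p s b ->
  e * qdist K e ell A p C b * lhat ell A p s b <= dl -> dl < 1 ->
  forall a, qdist K e ell A p (C ++ [s]) a <= / (1 - dl) * qdist K e ell A p C a.
Proof.
  intros HK He Hb H0 Hbpos Hq Hdl a.
  set (L := fun c => lhat ell A p s c) in *.
  set (w := fun c => exp (- e * rsum C (fun s0 => lhat ell A p s0 c))).
  set (W := rsum (seq 0 K) w).
  assert (HW : 0 < W) by (apply rsum_pos; auto; intros; apply exp_pos).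
  assert (Lpos : forall c, 0 <= L c).
  { intro c. destruct (Nat.eq_dec c b) as [->|n]; auto. unfold L; rewrite H0; auto; lra. }
  assert (Hw' : forall c, exp (- e * rsum (C ++ [s]) (fun s0 => lhat ell A p s0 c)) = w c * exp (- e * L c)).
  { intro c. rewrite rsum_app1. unfold w, L. rewrite <- exp_plus. f_equal. ring. }
  unfold qdist. rewrite Hw'. rewrite (rsum_ext _ _ _ Hw').
  fold w W.
  assert (HqW : qdist K e ell A p C b = w b / W) by reflexivity.
  assert (Hsum : rsum (seq 0 K) (fun c => w c * L c) = w b * L b).
  { apply (rsum_single _ (fun c => w c * L c)). apply seq_NoDup. apply in_seq; lia.
    intros c Hc; unfold L; rewrite H0; auto; ring. }
  assert (HW' : W * (1 - dl) <= rsum (seq 0 K) (fun c => w c * exp (- e * L c))).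
  { apply Rle_trans with (rsum (seq 0 K) (fun c => w c - e * (w c * L c))).
    - rewrite rsum_lin, Hsum. fold W. rewrite HqW in Hq.
      assert (e * w b * L b <= dl * W).
      { replace (e * w b * L b) with (e * (w b / W) * L b * W) by (field; lra).
        apply Rmult_le_compat_r; lra. }
      lra.
    - apply rsum_le; intro c. pose proof (exp_ge1 (- e * L c)).
      assert (0 < w c) by apply exp_pos. nra. }
  assert (Hwa : w a * exp (- e * L a) <= w a).
  { assert (exp (- e * L a) <= 1).
    { rewrite <- exp_0. destruct (Req_dec (L a) 0) as [E|E]. rewrite E; replace (- e * 0) with 0 by ring; lra.
      left; apply exp_increasing. specialize (Lpos a). nra. }
    assert (0 < w a) by apply exp_pos. nra. }
  assert (0 < w a) by apply exp_pos.
  assert (0 < 1 - dl) by lra.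
  assert (0 < W * (1 - dl)) by nra.
  apply Rle_trans with (w a / (W * (1 - dl))).
  - unfold Rdiv. apply Rle_trans with (w a * / rsum (seq 0 K) (fun c => w c * exp (- e * L c))).
    + apply Rmult_le_compat_r; auto. left; apply Rinv_0_lt_compat; lra.
    + apply Rmult_le_compat_l; [lra|]. apply Rinv_le_contravar; auto.
  - right. change (exp (- e * rsum C (fun s0 : nat => lhat ell A p s0 a))) with (w a). field. lra.
Qed.

Lemma first_fail (P : nat -> Prop) (Pdec : forall j, {P j} + {~ P j}) n :
  exists m, (m <= n)%nat /\ (forall j, (1 <= j <= m)%nat -> P j) /\ (m = n \/ ~ P (S m)).
Proof.
  induction n as [|n IH].
  - exists 0%nat; split; [lia|split; [intros; lia| now left]].
  - destruct IH as [m [Hm [HP [E|HN]]]].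
    + subst m. destruct (Pdec (S n)) as [Y|N].
      * exists (S n). split; [lia|split; [|now left]]. intros j Hj.
        destruct (Nat.eq_dec j (S n)) as [->|]; auto. apply HP; lia.
      * exists n. split; [lia|split; auto].
    + exists m. split; [lia|split; auto].
Qed.

Lemma NoDup_map_z (T : nat) (z : nat -> nat)
  (inj : forall i j, (1 <= i <= T)%nat -> (1 <= j <= T)%nat -> z i = z j -> i = j) :
  forall n a, (1 <= a)%nat -> (a + n <= T + 1)%nat -> NoDup (map z (seq a n)).
Proof.
  induction n as [|n IH]; intros a Ha Han; simpl; constructor.
  - intro Hin. apply in_map_iff in Hin as [j [Ej Hj]]. apply in_seq in Hj.
    assert (j = a) by (apply inj; lia). lia.
  - apply IH; lia.
Qed.

Lemma z_surj (T : nat) (z : nat -> nat)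
  (rng : forall i, (1 <= i <= T)%nat -> (1 <= z i <= T)%nat)
  (inj : forall i j, (1 <= i <= T)%nat -> (1 <= j <= T)%nat -> z i = z j -> i = j) :
  forall x, (1 <= x <= T)%nat -> exists j, (1 <= j <= T)%nat /\ z j = x.
Proof.
  intros x Hx.
  assert (H : incl (seq 1 T) (map z (seq 1 T))).
  { apply NoDup_length_incl.
    - apply (NoDup_map_z T); auto; lia.
    - rewrite length_map; lia.
    - intros y Hy. apply in_map_iff in Hy as [j [Ej Hj]]. apply in_seq in Hj. apply in_seq.
      subst; specialize (rng j); lia. }
  assert (In x (seq 1 T)) by (apply in_seq; lia).
  apply H in H0. apply in_map_iff in H0 as [j [Ej Hj]]. apply in_seq in Hj. exists j; split; [lia|auto].
Qed.

Lemma Nt_le T d D t : (forall t, (1 <= t <= T)%nat -> (d t <= D)%nat) -> (1 <= t <= T)%nat ->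
  (Nt T d t <= 2 * D)%nat.
Proof.
  intros hd Ht. unfold Nt.
  apply Nat.le_trans with (length (seq (t - D) D ++ seq t (d t))).
  - apply NoDup_incl_length. apply NoDup_filter, seq_NoDup.
    intros r Hr. apply filter_In in Hr as [Hr Hf]. apply in_seq in Hr.
    apply andb_prop in Hf as [H1 H2]. apply Nat.leb_le in H1. apply Nat.ltb_lt in H2.
    specialize (hd r ltac:(lia)). apply in_or_app.
    destruct (Nat.lt_ge_cases r t); [left|right]; apply in_seq; lia.
  - rewrite length_app, !length_seq. specialize (hd t Ht). lia.
Qed.

Lemma fold_max_le l M : (forall x, In x l -> (x <= M)%nat) -> (fold_right Nat.max 0 l <= M)%nat.
Proof.
  induction l; simpl; intros H; [lia|]. apply Nat.max_lub; auto.
Qed.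

Lemma Nmax_le T d D : (forall t, (1 <= t <= T)%nat -> (d t <= D)%nat) -> (Nmax T d <= 2 * D)%nat.
Proof.
  intros hd. unfold Nmax. apply fold_max_le. intros x Hx.
  apply in_map_iff in Hx as [t [<- Ht]]. apply in_seq in Ht. apply Nt_le; auto; lia.
Qed.

Lemma bernoulli k x : 0 <= x <= 1 -> 1 - INR k * x <= (1 - x) ^ k.
Proof.
  intros Hx. induction k as [|k IH]; [simpl; lra|]. rewrite S_INR; simpl.
  assert (0 <= INR k) by apply pos_INR. nra.
Qed.

Theorem lemma10
  (K T : nat) (hK : (2 <= K)%nat) (hT : (1 <= T)%nat)
  (ell : nat -> nat -> R) (d : nat -> nat) (eta : R) (dmax : nat)
  (hell : forall t a, (1 <= t <= T)%nat -> (a < K)%nat -> 0 <= ell t a <= 1)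
  (heta : 0 < eta)
  (hd : forall t, (1 <= t <= T)%nat -> (d t <= dmax)%nat)
  (hN : (1 <= Nmax T d)%nat)
  (A : nat -> nat) (hA : forall t, (1 <= t <= T)%nat -> (A t < K)%nat)
  (p : nat -> nat -> R) (hp : is_DEW_prob K T (eta_eff eta dmax) ell d A p)
  (z : nat -> nat) (hz : is_arrival_order T d z) :
  forall i a, (1 <= i <= T)%nat -> (a < K)%nat ->
    qdist K (eta_eff eta dmax) ell A p (Psi z i) a <=
    (1 + 1 / (2 * INR (Nmax T d) - 1)) *
    qdist K (eta_eff eta dmax) ell A p (Psi z (i - 1)) a.
Proof.
  destruct hz as [rng [inj mono]].
  pose proof (Nmax_le T d dmax hd) as HN2.
  assert (HD : (1 <= dmax)%nat) by lia.
  set (e' := eta_eff eta dmax).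
  assert (He' : e' = Rmin eta (/ (4 * exp 1 * INR dmax))).
  { unfold e', eta_eff. destruct (Nat.eqb_spec dmax 0); [lia|reflexivity]. }
  assert (HDR : 1 <= INR dmax) by (apply (le_INR 1); lia).
  assert (Hexp : 2 < exp 1) by (pose proof (exp_ineq1 1 ltac:(lra)); lra).
  assert (He'pos : 0 < e').
  { rewrite He'. apply Rmin_glb_lt; auto. apply Rinv_0_lt_compat. nra. }
  assert (He'le : e' <= / (4 * exp 1 * INR dmax)) by (rewrite He'; apply Rmin_r).
  set (dl := / (4 * INR dmax)).
  assert (Hdl : 0 < dl <= 1/4).
  { unfold dl. split. apply Rinv_0_lt_compat; lra.
    replace (1/4) with (/ (4 * 1)) by field. apply Rinv_le_contravar; lra. }
  assert (Hdl4 : dl * INR dmax = 1/4) by (unfold dl; field; lra).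
  assert (H2e : 2 * e' <= dl).
  { apply Rle_trans with (2 * / (4 * exp 1 * INR dmax)); [lra|].
    unfold dl. rewrite Rinv_mult. rewrite (Rinv_mult 4 (exp 1)).
    replace (/ (4 * INR dmax)) with (/4 * / INR dmax) by (rewrite Rinv_mult; auto).
    assert (/ exp 1 <= / 2) by (apply Rinv_le_contravar; lra).
    assert (0 < / INR dmax) by (apply Rinv_0_lt_compat; lra). nra. }
  assert (Key : forall n i a, (1 <= i <= T)%nat -> (i <= n)%nat -> (a < K)%nat ->
    qdist K e' ell A p (Psi z i) a <= / (1 - dl) * qdist K e' ell A p (Psi z (i - 1)) a).
  { induction n as [|n IHn]; intros i a Hi Hin Ha; [lia|].
    set (s := z i). assert (Hs : (1 <= s <= T)%nat) by (apply rng; auto).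
    assert (HsA : (A s < K)%nat) by auto.
    assert (HPsi : Psi z i = Psi z (i - 1) ++ [s]).
    { unfold Psi. replace i with (S (i - 1)) at 1 by lia. rewrite seq_S, map_app. simpl.
      replace (S (i - 1)) with i by lia. reflexivity. }
    set (P := p s (A s)).
    assert (HP : P = qdist K e' ell A p (observed d (s - 1)) (A s)) by (apply hp; auto).
    assert (HPpos : 0 < P) by (rewrite HP; apply qdist_pos; lia).
    assert (Hlhat : lhat ell A p s (A s) = ell s (A s) / P).
    { unfold lhat. rewrite Nat.eqb_refl. reflexivity. }
    pose proof (hell s (A s) Hs HsA) as Hl.
    destruct (first_fail (fun j => (z j + d (z j) < s)%nat) (fun j => Compare_dec.lt_dec _ _) T)
      as [m [HmT [HPm Hend]]].
    assert (Hmi : (m < i)%nat).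
    { destruct (Nat.lt_ge_cases m i) as [|H]; auto. specialize (HPm i ltac:(lia)).
      unfold s in HPm. lia. }
    assert (Hge : forall j, (1 <= j <= T)%nat -> (m < j)%nat -> (s <= z j + d (z j))%nat).
    { intros j Hj Hmj. destruct Hend as [E|HN]; [lia|].
      specialize (mono (S m) j ltac:(lia) Hj ltac:(lia)). lia. }
    assert (Hperm : Permutation (observed d (s - 1)) (Psi z m)).
    { apply NoDup_Permutation.
      - apply NoDup_filter, seq_NoDup.
      - apply (NoDup_map_z T z inj); lia.
      - intro x; split; intro Hx.
        + unfold observed in Hx. apply filter_In in Hx as [Hx1 Hx2].
          apply in_seq in Hx1. apply Nat.leb_le in Hx2.
          destruct (z_surj T z rng inj x ltac:(lia)) as [j [Hj Ej]].
          unfold Psi. apply in_map_iff. exists j. split; auto. apply in_seq.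
          destruct (Nat.lt_ge_cases m j) as [Hmj|]; [|lia].
          specialize (Hge j Hj Hmj). subst x. lia.
        + unfold Psi in Hx. apply in_map_iff in Hx as [j [Ej Hj]]. apply in_seq in Hj.
          specialize (HPm j ltac:(lia)). specialize (rng j ltac:(lia)). subst x.
          unfold observed. apply filter_In. split. apply in_seq; lia. apply Nat.leb_le; lia. }
    assert (HPm' : P = qdist K e' ell A p (Psi z m) (A s)) by (rewrite HP; now apply qdist_perm).
    assert (Hchain : forall k, (m + k <= i - 1)%nat ->
      qdist K e' ell A p (Psi z (m + k)) (A s) <= P / (1 - dl) ^ k).
    { induction k as [|k IHk]; intros Hk.
      - rewrite Nat.add_0_r, HPm'. simpl. right; field.
      - pose proof (IHn (m + S k)%nat (A s) ltac:(lia) ltac:(lia) HsA) as H1.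
        replace (m + S k - 1)%nat with (m + k)%nat in H1 by lia.
        specialize (IHk ltac:(lia)).
        assert (0 < / (1 - dl)) by (apply Rinv_0_lt_compat; lra).
        eapply Rle_trans; [apply H1|].
        apply Rle_trans with (/ (1 - dl) * (P / (1 - dl) ^ k)).
        + apply Rmult_le_compat_l; lra.
        + right. simpl. field. split; [|lra]. apply pow_nonzero; lra. }
    set (k0 := (i - 1 - m)%nat).
    assert (Hk0 : (k0 <= 2 * dmax)%nat).
    { apply Nat.le_trans with (length (seq (s - dmax) dmax ++ seq (S s) (d s))).
      - replace k0 with (length (map z (seq (S m) k0))) by (rewrite length_map, length_seq; auto).
        apply NoDup_incl_length. apply (NoDup_map_z T z inj); lia.
        intros r Hr. apply in_map_iff in Hr as [j [Ej Hj]]. apply in_seq in Hj.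
        assert (Hj' : (1 <= j <= T)%nat) by lia.
        pose proof (Hge j Hj' ltac:(lia)).
        pose proof (mono j i Hj' Hi ltac:(lia)).
        assert (r <> s). { intro E. subst r. unfold s in E. apply inj in E; auto; lia. }
        pose proof (hd r ltac:(subst r; apply rng; auto)). pose proof (hd s Hs).
        fold s in H0. subst r. apply in_or_app.
        destruct (Nat.lt_ge_cases (z j) s); [left|right]; apply in_seq; lia.
      - rewrite length_app, !length_seq. pose proof (hd s Hs). lia. }
    assert (HQ : qdist K e' ell A p (Psi z (i - 1)) (A s) <= 2 * P).
    { replace (i - 1)%nat with (m + k0)%nat by (unfold k0; lia).
      eapply Rle_trans; [apply Hchain; unfold k0; lia|].
      assert (Hb : 1/2 <= (1 - dl) ^ k0).
      { eapply Rle_trans; [|apply bernoulli; lra].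
        assert (INR k0 <= 2 * INR dmax).
        { replace 2 with (INR 2) by reflexivity. rewrite <- mult_INR. apply le_INR; auto. }
        nra. }
      unfold Rdiv. rewrite (Rmult_comm 2 P). apply Rmult_le_compat_l; [lra|].
      replace 2 with (/ (1/2)) by field. apply Rinv_le_contravar; lra. }
    rewrite HPsi. apply step with (b := A s); try lia; auto.
    - intros c Hc. unfold lhat. destruct (Nat.eqb_spec c (A s)); [contradiction|reflexivity].
    - rewrite Hlhat. unfold Rdiv; apply Rmult_le_pos; [lra|left; apply Rinv_0_lt_compat; lra].
    - rewrite Hlhat. set (Qv := qdist K e' ell A p (Psi z (i - 1)) (A s)) in *.
      assert (0 <= Qv) by (left; apply qdist_pos; lia).
      assert (Hu : P * / P = 1) by (field; lra).
      assert (0 < / P) by (apply Rinv_0_lt_compat; lra).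
      assert (Qv * / P <= 2) by nra.
      assert (0 <= Qv * / P) by nra.
      assert (Qv * / P * ell s (A s) <= 2) by nra.
      unfold Rdiv. replace (e' * Qv * (ell s (A s) * / P)) with (e' * (Qv * / P * ell s (A s))) by ring.
      nra.
    - lra. }
  intros i a Hi Ha.
  eapply Rle_trans; [apply (Key i i a Hi (le_n i) Ha)|].
  apply Rmult_le_compat_r; [left; apply qdist_pos; lia|].
  set (x := INR (Nmax T d)).
  assert (Hx1 : 1 <= x) by (apply (le_INR 1); auto).
  assert (Hx2 : x <= 2 * INR dmax).
  { unfold x. replace 2 with (INR 2) by reflexivity. rewrite <- mult_INR. apply le_INR; auto. }
  replace (/ (1 - dl)) with (1 + 1 / (4 * INR dmax - 1)) by (unfold dl; field; lra).
  apply Rplus_le_compat_l. unfold Rdiv. rewrite !Rmult_1_l.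
  apply Rinv_le_contravar; lra.
Qed.
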